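(* Let $\mathrm{k}$ be an infinite field and $\mathcal{A}$ a unital associative $\mathrm{k}$-algebra satisfying $\mathbf{H}_{\mathrm{s}}$. Let $V$ be an $n$-dimensional $\mathrm{k}$-subspace of $\mathcal{A}$ with $V\cap U(\mathcal{A})\neq\emptyset$, and let $\{x_1,\ldots,x_n\}$ be a basis of $V$ with $x_1$ invertible. Let $X=\{x_1+\alpha x_2+\cdots+\alpha^{n-1}x_n\mid\alpha\in\mathrm{k}\}$. Then: (1) any $n$ vectors of $X$ corresponding to $n$ distinct values of $\alpha$ form a basis of $V$; (2) infinitely many elements $x_1+\alpha x_2+\cdots+\alpha^{n-1}x_n$, $\alpha\in\mathrm{k}$, are invertible; (3) $X$ contains a basis of $V$ consisting of invertible elements.
   Context: $U(\mathcal{A})$ is the group of invertible elements. Hypothesis $\mathbf{H}_{\mathrm{s}}$: $\mathcal{A}$ is finite-dimensional over $\mathrm{k}$, or $\mathrm{k}\in\{\mathbb{R},\mathbb{C}\}$ and $\mathcal{A}$ is a Banach algebra over $\mathrm{k}$, or $\mathcal{A}$ is a finite product of field extensions of $\mathrm{k}$. *)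

(* Defs.v *)
From HB Require Import structures.
From mathcomp Require Import all_boot all_order all_algebra.
From mathcomp Require Import reals.
From mathcomp Require Import complex.

Set Implicit Arguments.
Unset Strict Implicit.
Unset Printing Implicit Defensive.

Import Order.TTheory GRing.Theory Num.Theory.
Local Open Scope ring_scope.

Definition infinite_type (T : eqType) : Prop :=
  forall s : seq T, exists x : T, x \notin s.

Definition fin_dim (k : fieldType) (A : lmodType k) : Prop :=
  exists s : seq A, forall a : A,
    exists c : 'I_(size s) -> k, a = \sum_(i < size s) c i *: s`_i.

(* Banach algebra structure on the k-algebra A, where k is identified with
   the normed field K (= R or C) through the field isomorphism phi. *)
Definition banach_norm (K : numFieldType) (k : fieldType) (phi : K -> k)
    (A : unitAlgType k) (N : A -> K) : Prop :=
  [/\ (forall a : A, 0 <= N a) /\ (forall a : A, N a = 0 -> a = 0),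
      forall a b : A, N (a + b) <= N a + N b,
      forall (c : K) (a : A), N (phi c *: a) = `|c| * N a,
      forall a b : A, N (a * b) <= N a * N b
    & forall u : nat -> A,
        (forall e : K, 0 < e -> exists M : nat, forall m p : nat,
            (M <= m)%N -> (M <= p)%N -> N (u m - u p) < e) ->
        exists l : A, forall e : K, 0 < e -> exists M : nat, forall m : nat,
            (M <= m)%N -> N (u m - l) < e].

Definition banach_over_R_or_C (k : fieldType) (A : unitAlgType k) : Prop :=
  exists R : realType,
    (exists phi : {rmorphism R -> k}, bijective phi /\
       exists N : A -> R, banach_norm phi N)
    \/
    (exists phi : {rmorphism R[i] -> k}, bijective phi /\
       exists N : A -> R[i], banach_norm phi N).

(* A is (isomorphic as a k-algebra to) a finite product of field extensions
   L_0 x ... x L_(m-1) of k: f i are the coordinate maps, which are k-algebra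
   morphisms (k acting on L_i through iota i), and together they form a
   bijection A -> prod_i L_i. *)
Definition finite_product_of_field_ext (k : fieldType) (A : unitAlgType k)
    : Prop :=
  exists (m : nat) (L : 'I_m -> fieldType)
         (iota : forall i, {rmorphism k -> L i})
         (f : forall i, {rmorphism A -> L i}),
    [/\ forall i (c : k) (a : A), f i (c *: a) = iota i c * f i a,
        forall a b : A, (forall i, f i a = f i b) -> a = b
      & forall y : (forall i, L i), exists a : A, forall i, f i a = y i].

Definition H_s (k : fieldType) (A : unitAlgType k) : Prop :=
  fin_dim A \/ banach_over_R_or_C A \/ finite_product_of_field_ext A.

Definition in_span (k : fieldType) (A : lmodType k) (m : nat)
    (x : 'I_m -> A) (v : A) : Prop :=
  exists c : 'I_m -> k, v = \sum_(i < m) c i *: x i.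

Definition lin_indep (k : fieldType) (A : lmodType k) (m : nat)
    (x : 'I_m -> A) : Prop :=
  forall c : 'I_m -> k, \sum_(i < m) c i *: x i = 0 -> forall i, c i = 0.

Definition is_basis_of (k : fieldType) (A : lmodType k) (V : A -> Prop)
    (m : nat) (y : 'I_m -> A) : Prop :=
  [/\ forall i, V (y i), lin_indep y & forall v, V v -> in_span y v].

Definition moment_vec (k : fieldType) (A : lmodType k) (n : nat)
    (x : 'I_n -> A) (alpha : k) : A :=
  \sum_(i < n) alpha ^+ i *: x i.

(* Main.v *)
Require Import Defs.
From HB Require Import structures.
From mathcomp Require Import all_boot all_order all_algebra.
From mathcomp Require Import reals complex.
From Stdlib Require Import Classical ClassicalEpsilon.
From mathcomp Require Import zify ring lra.
Import Order.TTheory GRing.Theory Num.Theory.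
Local Open Scope ring_scope.
Set Implicit Arguments.
Unset Strict Implicit.

Lemma mv_comb (k : fieldType) (A : lmodType k) n (x : 'I_n -> A) (alpha : 'I_n -> k) (d : 'I_n -> k) :
  \sum_(j < n) d j *: moment_vec x (alpha j) =
  \sum_(i < n) (\sum_(j < n) alpha j ^+ i * d j) *: x i.
Proof.
rewrite /moment_vec.
under eq_bigr do rewrite scaler_sumr.
rewrite exchange_big /=; apply: eq_bigr => i _.
rewrite scaler_suml; apply: eq_bigr => j _.
by rewrite scalerA mulrC.
Qed.

Lemma part1 (k : fieldType) (A : lmodType k) n (x : 'I_n -> A) (xi : lin_indep x)
  (alpha : 'I_n -> k) (ainj : injective alpha) :
  is_basis_of (in_span x) (fun i => moment_vec x (alpha i)).
Proof.
set W := Vandermonde n (\row_j alpha j).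
have WE : forall i j, W i j = alpha j ^+ i by move=> i j; rewrite /W /Vandermonde !mxE.
have Wu : W \in unitmx.
  rewrite unitmxE det_Vandermonde unitfE; apply/prodf_neq0 => i _.
  apply/prodf_neq0 => j ij; rewrite !mxE subr_eq0; apply/eqP => /ainj eij.
  by move: ij; rewrite eij ltnn.
split.
- by move=> i; exists (fun j => alpha i ^+ j).
- move=> c; rewrite mv_comb => /xi h.
  pose cv := \col_j c j.
  have : W *m cv = 0.
    apply/matrixP => i z; rewrite !mxE -[RHS](h i); apply: eq_bigr => j _.
    by rewrite !mxE.
  move=> /(congr1 (mulmx (invmx W))); rewrite mulmxA mulVmx // mul1mx mulmx0 => cv0 i.
  by have := congr1 (fun M : 'cV_n => M i 0) cv0; rewrite !mxE.
- move=> v [c ->].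
  pose d := invmx W *m \col_j c j.
  exists (fun j => d j 0); rewrite mv_comb; apply: eq_bigr => i _; congr (_ *: _).
  have : (W *m d) i 0 = c i by rewrite /d mulmxA mulmxV // mul1mx mxE.
  by rewrite mxE => <-; apply: eq_bigr => j _; rewrite WE.
Qed.

Lemma fin_bad (T : eqType) (bad : T -> Prop) (N : nat) :
  (forall b : seq T, uniq b -> (forall a, a \in b -> bad a) -> (size b <= N)%N) ->
  exists b : seq T, forall a, bad a -> a \in b.
Proof.
move=> HN.
suff H : forall d b, uniq b -> (forall a, a \in b -> bad a) -> (N - size b <= d)%N ->
  exists b : seq T, forall a, bad a -> a \in b.
  by apply: (H N [::]) => //; rewrite leq_subr.
elim=> [|d IH] b ub bb hd;
  (case: (classic (exists a, bad a /\ a \notin b)) => [[a [ba nab]]|nex];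
   last by exists b => a ba; apply/negPn/negP => nab; apply: nex; exists a).
- have hb : forall z, z \in a :: b -> bad z.
    by move=> z; rewrite inE => /orP[/eqP->|]; [|apply: bb].
  have := HN (a :: b); rewrite /= nab ub => /(_ isT hb) sb.
  exfalso; move: hd sb; lia.
- have hb : forall z, z \in a :: b -> bad z.
    by move=> z; rewrite inE => /orP[/eqP->|]; [|apply: bb].
  apply: (IH (a :: b)); rewrite /= ?nab ?ub //.
  have := HN (a :: b); rewrite /= nab ub => /(_ isT hb) sb.
  move: hd sb; lia.
Qed.

Lemma poly_bad (k L : fieldType) (iota : {rmorphism k -> L}) (p : {poly L}) :
  p != 0 -> exists b : seq k, forall a, root p (iota a) -> a \in b.
Proof.
move=> p0; apply: (@fin_bad _ _ (size p)) => b ub hb.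
have := @max_poly_roots _ p (map iota b) p0.
rewrite (map_inj_uniq (fmorph_inj iota)) ub => h.
apply: ltnW; rewrite -(size_map iota); apply: h => //.
by apply/allP => z /mapP [a ab ->]; apply: hb.
Qed.

Lemma fp_case (k : fieldType) (A : unitAlgType k) n (hn : (0 < n)%N) (x : 'I_n -> A)
  (x1 : x (Ordinal hn) \is a GRing.unit) (k_inf : infinite_type k) (H : finite_product_of_field_ext A) :
  forall s : seq k, exists alpha : k,
         alpha \notin s /\ moment_vec x alpha \is a GRing.unit.
Proof.
case: H => m [L [iota [f [fZ finj fsurj]]]] s.
pose P i := \poly_(l < n) f i (x (insubd (Ordinal hn) l)).
have hP : forall i, exists b : seq k, forall a, root (P i) (iota i a) -> a \in b.
  move=> i; apply: poly_bad; apply/eqP => P0.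
  have := congr1 (fun q : {poly L i} => q`_0) P0.
  rewrite /= coef_poly hn coef0 => /eqP; apply/negP; rewrite -unitfE.
  have -> : insubd (Ordinal hn) 0 = Ordinal hn by apply: val_inj; rewrite val_insubd hn.
  by apply: rmorph_unit.
pose bI i := proj1_sig (constructive_indefinite_description _ (hP i)).
have bIP : forall i a, root (P i) (iota i a) -> a \in bI i.
  by move=> i; rewrite /bI; case: constructive_indefinite_description.
have [a aB] := k_inf (s ++ flatten [seq bI i | i <- enum 'I_m]).
exists a; split.
  by apply: contra aB; rewrite mem_cat => ->.
have fm : forall i, f i (moment_vec x a) = (P i).[iota i a].
  move=> i; rewrite /moment_vec rmorph_sum horner_poly; apply: eq_bigr => l _.
  have -> : insubd (Ordinal hn) l = l by apply: val_inj; rewrite val_insubd ltn_ord.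
  by rewrite fZ rmorphXn mulrC.
have fnz : forall i, f i (moment_vec x a) != 0.
  move=> i; rewrite fm; apply/negP => /eqP r0.
  have : a \in bI i by apply: bIP; apply/eqP.
  move=> abI; move: aB; rewrite mem_cat negb_or => /andP[_ /negP]; apply.
  by apply/flattenP; exists (bI i) => //; apply: map_f; rewrite mem_enum.
have [b fb] := fsurj (fun i => (f i (moment_vec x a))^-1).
apply/unitrP; exists b; split; apply: finj => i.
  rewrite rmorphM rmorph1 fb mulVf ?fnz //.
rewrite rmorphM rmorph1 fb mulfV ?fnz //.
Qed.

Lemma extract (k : fieldType) (A : lmodType k) d (f : 'I_d -> A) :
  (forall a, in_span f a) ->
  exists d' (t : 'I_d' -> A), lin_indep t /\ forall a, in_span t a.
Proof.
elim: d f => [|d IH] f hs.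
  by exists 0%N, f; split => // c _ [].
case: (classic (lin_indep f)) => [li|nli]; first by exists d.+1, f.
have [c hc] := not_all_ex_not _ _ nli.
have [c0 hci] := imply_to_and _ _ hc.
have [i ci] := not_all_ex_not _ _ hci.
apply: (IH (fun j => f (lift i j))) => a.
have [e ->] := hs a.
have sc := c0; rewrite (bigD1_ord i) //= in sc.
have fi : f i = - (c i)^-1 *: \sum_(j < d) c (lift i j) *: f (lift i j).
  have ci' : c i != 0 by apply/eqP.
  have h : c i *: f i = - \sum_(j < d) c (lift i j) *: f (lift i j).
    by apply/eqP; rewrite -addr_eq0 sc.
  by rewrite -{1}(scalerK ci' (f i)) h scalerN scaleNr.
exists (fun j => e (lift i j) - e i * (c i)^-1 * c (lift i j)).
rewrite (bigD1_ord i) //= fi.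
under [RHS]eq_bigr do rewrite scalerBl.
rewrite sumrB addrC; congr (_ + _).
rewrite scalerA scaler_sumr -sumrN; apply: eq_bigr => j _.
by rewrite scalerA mulrN mulNr scaleNr.
Qed.

Lemma fd_case (k : fieldType) (A : unitAlgType k) n (hn : (0 < n)%N) (x : 'I_n -> A)
  (x1 : x (Ordinal hn) \is a GRing.unit) (k_inf : infinite_type k) (H : fin_dim A) :
  forall s : seq k, exists alpha : k,
         alpha \notin s /\ moment_vec x alpha \is a GRing.unit.
Proof.
move=> s.
have [d [t [tli tsp]]] : exists d' (t : 'I_d' -> A), lin_indep t /\ forall a, in_span t a.
  case: H => s0 hs0; apply: (@extract _ _ (size s0) (fun i => s0`_i)) => a.
  by have [c ->] := hs0 a; exists c.
pose co a := proj1_sig (constructive_indefinite_description _ (tsp a)).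
have coE : forall a, a = \sum_(j < d) co a j *: t j.
  by move=> a; rewrite /co; case: constructive_indefinite_description.
pose Phi (r : 'rV[k]_d) := \sum_(j < d) r 0 j *: t j.
have PhiB : forall r1 r2, Phi r1 - Phi r2 = Phi (r1 - r2).
  move=> r1 r2; rewrite /Phi -sumrB; apply: eq_bigr => j _.
  by rewrite !mxE scalerBl.
have Phi_inj : forall r1 r2, Phi r1 = Phi r2 -> r1 = r2.
  move=> r1 r2 /eqP; rewrite -subr_eq0 PhiB => /eqP /tli h.
  apply/rowP => j; apply/eqP; rewrite -subr_eq0; apply/eqP.
  by have := h j; rewrite !mxE.
have Phi0 : Phi 0 = 0 by rewrite /Phi big1 // => j _; rewrite mxE scale0r.
have PhiC : forall a, Phi (\row_j co a j) = a.
  by move=> a; rewrite [RHS]coE; apply: eq_bigr => j _; rewrite mxE.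
have PhiM : forall (C : 'M[k]_d) (g : 'I_d -> A),
    (forall i, \sum_(j < d) C i j *: t j = g i) ->
    forall r, Phi (r *m C) = \sum_(i < d) r 0 i *: g i.
  move=> C g hg r; rewrite /Phi.
  under eq_bigr do rewrite mxE scaler_suml.
  rewrite exchange_big /=; apply: eq_bigr => i _.
  by rewrite -hg scaler_sumr; apply: eq_bigr => j _; rewrite scalerA.
pose Ma (a : A) := \matrix_(i, j) co (a * t i) j.
have PhiMa : forall a r, Phi (r *m Ma a) = a * Phi r.
  move=> a r; rewrite (@PhiM _ (fun i => a * t i)).
    by rewrite /Phi mulr_sumr; apply: eq_bigr => i _; rewrite scalerAr.
  by move=> i; rewrite [RHS]coE; apply: eq_bigr => j _; rewrite mxE.
pose M (al : k) := \matrix_(i, j) \sum_(l < n) al ^+ l * co (x l * t i) j.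
have PhiMal : forall al r, Phi (r *m M al) = moment_vec x al * Phi r.
  move=> al r; rewrite (@PhiM _ (fun i => moment_vec x al * t i)).
    by rewrite /Phi mulr_sumr; apply: eq_bigr => i _; rewrite scalerAr.
  move=> i; rewrite /moment_vec mulr_suml.
  under eq_bigr do rewrite mxE scaler_suml.
  rewrite exchange_big /=; apply: eq_bigr => l _.
  rewrite -scalerAl [X in _ = _ *: X]coE scaler_sumr; apply: eq_bigr => j _.
  by rewrite scalerA.
have m0 : moment_vec x 0 = x (Ordinal hn).
  rewrite /moment_vec (bigD1 (Ordinal hn)) //= expr0 scale1r big1 ?addr0 // => l hl.
  rewrite expr0n; case: eqP => [l0|]; last by rewrite scale0r.
  by move: hl; have -> : l = Ordinal hn by apply: val_inj. 
have M0u : M 0 \in unitmx.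
  have [y [yx xy]] := unitrP x1.
  suff : M 0 *m Ma y = 1%:M by case/mulmx1_unit.
  apply/row_matrixP => i; rewrite !rowE mulmx1 mulmxA; apply: Phi_inj.
  by rewrite PhiMa PhiMal m0 mulrA yx mul1r.
pose P : 'M[{poly k}]_d := \matrix_(i, j) \poly_(l < n) co (x (insubd (Ordinal hn) l) * t i) j.
have MP : forall al, M al = map_mx (horner_eval al) P.
  move=> al; apply/matrixP => i j; rewrite !mxE horner_evalE horner_poly.
  apply: eq_bigr => l _.
  have -> : insubd (Ordinal hn) l = l by apply: val_inj; rewrite val_insubd ltn_ord.
  by rewrite mulrC.
have detM : forall al, \det (M al) = (\det P).[al] by move=> al; rewrite MP det_map_mx.
have P0 : \det P != 0.
  by apply/eqP => h; move: M0u; rewrite unitmxE detM h horner0 unitr0.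
have [b hb] := poly_bad (idfun : {rmorphism k -> k}) P0.
have [al alB] := k_inf (s ++ b).
exists al; split; first by apply: contra alB; rewrite mem_cat => ->.
have Mu : M al \in unitmx.
  rewrite unitmxE detM unitfE; apply/negP => /eqP r0.
  by move: alB; rewrite mem_cat negb_or => /andP[_ /negP]; apply; apply: hb; apply/eqP.
set m := moment_vec x al.
pose r := \row_j co 1 j *m invmx (M al).
have mr : m * Phi r = 1 by rewrite -PhiMal /r mulmxKV // PhiC.
apply/unitrP; exists (Phi r); split => //.
set z := Phi r * m - 1.
have mz : m * z = 0 by rewrite /z mulrBr mulrA mr mul1r mulr1 subrr.
have : \row_j co z j *m M al = 0.
  by apply: Phi_inj; rewrite PhiMal PhiC mz Phi0.
move=> /(congr1 (mulmx ^~ (invmx (M al)))); rewrite mulmxK // mul0mx => w0.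
by apply/eqP; rewrite -subr_eq0 -/z -(PhiC z) w0 Phi0.
Qed.

Lemma bn_N0 (R : realType) (k : fieldType) (phi : {rmorphism R -> k}) (A : unitAlgType k)
  (N : A -> R) (hN : banach_norm phi N) : N 0 = 0.
Proof.
case: hN => _ _ NZ _ _.
by have := NZ 0 0; rewrite rmorph0 scaler0 normr0 mul0r.
Qed.

Lemma bn_NN (R : realType) (k : fieldType) (phi : {rmorphism R -> k}) (A : unitAlgType k)
  (N : A -> R) (hN : banach_norm phi N) a : N (- a) = N a.
Proof.
case: hN => _ _ NZ _ _.
by have := NZ (-1) a; rewrite rmorphN1 scaleN1r normrN normr1 mul1r.
Qed.

Lemma bn_sum (R : realType) (k : fieldType) (phi : {rmorphism R -> k}) (A : unitAlgType k)
  (N : A -> R) (hN : banach_norm phi N) m (F : 'I_m -> A) :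
  N (\sum_(i < m) F i) <= \sum_(i < m) N (F i).
Proof.
have N0 := bn_N0 hN; case: hN => _ Ntri _ _ _.
elim: m F => [|m IH] F; first by rewrite !big_ord0 N0.
rewrite !big_ord_recr /=; apply: le_trans (Ntri _ _) _.
by rewrite lerD2r IH.
Qed.

Lemma bn_X (R : realType) (k : fieldType) (phi : {rmorphism R -> k}) (A : unitAlgType k)
  (N : A -> R) (hN : banach_norm phi N) q j : N (q ^+ j.+1) <= N q ^+ j.+1.
Proof.
case: hN => [[Npos _]] _ _ Nmul _.
elim: j => [|j IH]; first by rewrite !expr1.
rewrite exprSr [N q ^+ _]exprSr; apply: le_trans (Nmul _ _) _.
by apply: ler_wpM2r => //.
Qed.

Lemma bn_zero (R : realType) (k : fieldType) (phi : {rmorphism R -> k}) (A : unitAlgType k)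
  (N : A -> R) (hN : banach_norm phi N) a : (forall e, 0 < e -> N a < e) -> a = 0.
Proof.
case: hN => [[Npos Nz]] _ _ _ _ h; apply: Nz.
have := Npos a; rewrite le_eqVlt => /orP[/eqP <- //|lt0].
by have := h _ lt0; rewrite ltxx.
Qed.

Lemma geo_small (R : realType) (rho : R) : 0 <= rho -> rho <= 2^-1 ->
  forall e, 0 < e -> exists M : nat, forall j, (M <= j)%N -> 2 * rho ^+ j < e.
Proof.
move=> r0 r1 e e0.
have b0 : 0 <= 2 / e by rewrite divr_ge0 // ltW.
exists (Num.bound (2 / e)) => j hj.
have hb := archi_boundP b0.
have h2j : (j%:R : R) < 2 ^+ j.
  by rewrite -natrX ltr_nat ltn_expl.
have hj' : ((Num.bound (2 / e))%:R : R) <= j%:R by rewrite ler_nat.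
have hlt : 2 / e < 2 ^+ j by apply: lt_le_trans hb _; apply: le_trans hj' (ltW h2j).
have rj : rho ^+ j <= (2^-1) ^+ j by apply: lerXn2r; rewrite ?nnegrE // invr_ge0.
have p2 : 0 < (2 : R) ^+ j by apply: exprn_gt0.
apply: le_lt_trans (_ : 2 * (2^-1) ^+ j < e); first by rewrite ler_pM2l.
rewrite exprVn -[2 * _]/(2 / 2 ^+ j) ltr_pdivrMr // -ltr_pdivrMl //.
by rewrite mulrC.
Qed.

Lemma geo_sum (R : realType) (rho : R) : 0 <= rho -> rho <= 2^-1 ->
  forall p d, \sum_(j < d) rho ^+ (p + j)%N + 2 * rho ^+ (p + d)%N <= 2 * rho ^+ p.
Proof.
move=> r0 r1 p; elim=> [|d IH]; first by rewrite big_ord0 add0r addn0.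
rewrite big_ord_recr /= addnS exprS; apply: le_trans IH.
have : 0 <= rho ^+ (p + d)%N by apply: exprn_ge0.
set t := rho ^+ (p + d)%N; set S := \sum_(i < d) _.
nra.
Qed.

Lemma neumann (R : realType) (k : fieldType) (phi : {rmorphism R -> k}) (A : unitAlgType k)
  (N : A -> R) (hN : banach_norm phi N) q : N q <= 2^-1 -> (1 - q) \is a GRing.unit.
Proof.
move=> hq.
have N0 := bn_N0 hN; have NN := bn_NN hN; have Nsum := bn_sum hN; have NX := bn_X hN.
have Nzero := bn_zero hN.
case: (hN) => [[Npos Nz]] Ntri NZ Nmul Ncomp.
set rho := N q.
have r0 : 0 <= rho := Npos q.
pose u m := \sum_(j < m) q ^+ j.
have uS : forall m, u m.+1 = u m + q ^+ m by move=> m; rewrite /u big_ord_recr.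
have tele : forall p d, u (p + d)%N - u p = \sum_(j < d) q ^+ (p + j)%N.
  move=> p; elim=> [|d IH]; first by rewrite big_ord0 addn0 subrr.
  by rewrite addnS uS big_ord_recr /= -IH addrAC.
have NB : forall a b, N (a - b) = N (b - a) by move=> a b; rewrite -NN opprB.
have cauchy : forall e, 0 < e -> exists M : nat, forall m p : nat,
    (M <= m)%N -> (M <= p)%N -> N (u m - u p) < e.
  move=> e e0; have [M0 hM0] := geo_small r0 hq e0.
  exists M0.+1.
  suff H : forall m p, (M0.+1 <= p)%N -> (p <= m)%N -> N (u m - u p) < e.
    move=> m p hm hp; case: (leqP p m) => hpm; first exact: H.
    by rewrite NB; apply: H => //; apply: ltnW.
  move=> m p hp hpm; rewrite -(subnKC hpm) tele.
  apply: le_lt_trans (Nsum _ _) _.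
  apply: le_lt_trans (_ : \sum_(j < m - p) rho ^+ (p + j)%N < e).
    apply: ler_sum => j _.
    have -> : (p + j = (p + j).-1.+1)%N by rewrite prednK // addn_gt0 (leq_trans _ hp).
    exact: NX.
  have := geo_sum r0 hq p (m - p).
  have := hM0 p (ltnW hp).
  have : 0 <= rho ^+ (p + (m - p))%N by apply: exprn_ge0.
  lra.
have [l hl] := Ncomp u cauchy.
have Lm : forall m, (1 - q) * u m = 1 - q ^+ m.
  elim=> [|m IH]; first by rewrite /u big_ord0 mulr0 expr0 subrr.
  by rewrite uS mulrDr IH mulrBl mul1r -exprS; rewrite addrA subrK.
have Rm : forall m, u m * (1 - q) = 1 - q ^+ m.
  elim=> [|m IH]; first by rewrite /u big_ord0 mul0r expr0 subrr.
  by rewrite uS mulrDl IH mulrBr mulr1 -exprSr; rewrite addrA subrK.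
set a := N (1 - q).
have a0 : 0 <= a := Npos _.
have key : forall T, (forall m, N T <= a * N (u m - l) + N (q ^+ m)) -> T = 0.
  move=> T hT; apply: Nzero => e e0.
  have e'0 : 0 < e / (2 * (a + 1)) by rewrite divr_gt0 // mulr_gt0 // ltr_wpDl.
  have [M1 hM1] := hl _ e'0.
  have [M2 hM2] := geo_small r0 hq e0.
  pose m := (maxn M1 M2).+1.
  have h1 := hM1 m (leq_trans (leq_maxl _ _) (leqnSn _)).
  have h2 := hM2 m (leq_trans (leq_maxr _ _) (leqnSn _)).
  have h3 := NX q (maxn M1 M2).
  have h4 := hT m.
  have b0 : 0 <= N (u m - l) := Npos _.
  have h5 : a * N (u m - l) <= (a + 1) * (e / (2 * (a + 1))).
    apply: le_trans (_ : (a + 1) * N (u m - l) <= _).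
      by apply: ler_wpM2r => //; lra.
    by apply: ler_wpM2l; [lra | apply: ltW].
  have h6 : (a + 1) * (e / (2 * (a + 1))) = e / 2.
    by field; rewrite lt0r_neq0 //; lra.
  rewrite /m in h4 h1; lra.
apply/unitrP; exists l; split.
  apply/eqP; rewrite -subr_eq0; apply/eqP; apply: key => m.
  have -> : l * (1 - q) - 1 = - ((u m - l) * (1 - q)) - q ^+ m.
    by rewrite [(u m - l) * _]mulrBl Rm opprB opprB addrA addrAC addrK.
  apply: le_trans (Ntri _ _) _; rewrite !NN mulrC; apply: lerD => //.
apply/eqP; rewrite -subr_eq0; apply/eqP; apply: key => m.
have -> : (1 - q) * l - 1 = - ((1 - q) * (u m - l)) - q ^+ m.
  by rewrite [(1 - q) * (u m - l)]mulrBr Lm opprB opprB addrA addrAC addrK.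
apply: le_trans (Ntri _ _) _; rewrite !NN; apply: lerD => //.
Qed.

Lemma avoid_nat (T : eqType) (g : nat -> T) (ginj : injective g) (s : seq T) J :
  exists j, (J <= j)%N /\ g j \notin s.
Proof.
case: (classic (exists j, (J <= j)%N /\ g j \notin s)) => // nex; exfalso.
have sub : {subset map g (iota J (size s).+1) <= s}.
  move=> z /mapP [j]; rewrite mem_iota => /andP[hj _] ->.
  by apply/negPn/negP => hn; apply: nex; exists j.
have := uniq_leq_size (etrans (map_inj_uniq ginj _) (iota_uniq J (size s).+1)) sub.
by rewrite size_map size_iota ltnn.
Qed.

Lemma bn_case (R : realType) (k : fieldType) (phi : {rmorphism R -> k})
  (phi_inj : injective phi) (A : unitAlgType k) (N : A -> R) (hN : banach_norm phi N)
  n (hn : (0 < n)%N) (x : 'I_n -> A) (x1 : x (Ordinal hn) \is a GRing.unit) :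
  forall s : seq k, exists alpha : k,
         alpha \notin s /\ moment_vec x alpha \is a GRing.unit.
Proof.
move=> s.
have N0 := bn_N0 hN; have NN := bn_NN hN; have Nsum := bn_sum hN.
case: (hN) => [[Npos Nz]] Ntri NZ Nmul Ncomp.
set x0 := x (Ordinal hn).
set y0 := x0^-1.
pose S := \sum_(l < n) N (y0 * x l).
have S0 : 0 <= S by apply: sumr_ge0 => l _; apply: Npos.
pose g j := phi ((j.+1)%:R^-1).
have ginj : injective g.
  move=> i j /phi_inj /invr_inj /eqP; rewrite eqr_nat => /eqP [].
  done.
have [j [hj gs]] := avoid_nat ginj s (Num.bound (2 * S)).
exists (g j); split => //.
set c : R := (j.+1)%:R^-1.
have c0 : 0 < c by rewrite invr_gt0 ltr0n.
have c1 : c <= 1 by rewrite invf_le1 // ?ler1n // ltr0n.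
have cS : c * S <= 2^-1.
  have hb := archi_boundP (mulr_ge0 (ler0n _ 2) S0).
  have : ((Num.bound (2 * S))%:R : R) <= j.+1%:R by rewrite ler_nat; apply: leqW.
  move=> hb2; have h2S : 2 * S < j.+1%:R by apply: lt_le_trans hb hb2.
  rewrite /c mulrC -[S / _]/(S / j.+1%:R) ler_pdivrMr ?ltr0n //.
  have : 0 < (j.+1%:R : R) by rewrite ltr0n.
  lra.
set al := g j.
pose F (l : 'I_n) := if l != Ordinal hn then al ^+ l *: (y0 * x l) else 0.
set q := - \sum_(l < n) F l.
have mE : moment_vec x al = x0 * (1 - q).
  rewrite /q opprK /moment_vec mulrDr mulr1 /F -big_mkcond /= mulr_sumr.
  rewrite (bigD1 (Ordinal hn)) //= expr0 scale1r; congr (_ + _).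
  by apply: eq_bigr => l _; rewrite -scalerAr /y0 mulVKr.
rewrite mE unitrMr // -/x0; apply: (neumann hN).
rewrite /q NN; apply: le_trans (Nsum _ _) _; apply: le_trans cS.
rewrite /S mulr_sumr; apply: ler_sum => l _; rewrite /F.
case: eqP => [_|hl]; first by rewrite N0 mulr_ge0 // ltW.
have [l' hl'] : exists l', val l = l'.+1.
  case: l hl => [[|l'] ?] hl; last by exists l'.
  by exfalso; apply: hl; apply: val_inj.
rewrite /al /g -rmorphXn NZ hl' ler_wpM2r // -/c.
rewrite ger0_norm; last by apply: exprn_ge0; apply: ltW.
rewrite exprS; apply: ler_piMr; first exact: ltW.
by apply: exprn_ile1 => //; apply: ltW.
Qed.

Lemma cR (R : realType) (z : R[i]) : 0 <= z -> z = real_complex R (complex.Re z).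
Proof.
case: z => a b; rewrite lecE /= => /andP[/eqP b0 _].
by rewrite b0.
Qed.

Lemma bn_complex (R : realType) (k : fieldType) (phi : {rmorphism R[i] -> k})
  (A : unitAlgType k) (N : A -> R[i]) (hN : banach_norm phi N) :
  banach_norm (phi \o real_complex R) (fun a => complex.Re (N a)).
Proof.
case: hN => [[Npos Nz]] Ntri NZ Nmul Ncomp.
set N' := fun a => complex.Re (N a).
have hC : forall a, N a = (N' a)%:C%C by move=> a; apply: cR.
have nrc : forall c : R, `|c%:C%C| = (`|c|)%:C%C.
  move=> c; rewrite normc_def /= expr0n /= addr0 sqrtr_sqr //.
split.
- split => a.
    by rewrite -ler0c; have := Npos a; rewrite hC.
  by move=> h; apply: Nz; rewrite hC h.
- by move=> a b; rewrite -lecR; have := Ntri a b; rewrite !hC -rmorphD.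
- move=> c a; apply: complexI; rewrite /= -hC NZ hC nrc -rmorphM.
  by [].
- by move=> a b; rewrite -lecR; have := Nmul a b; rewrite !hC -rmorphM.
move=> u hu.
have hu' : forall e : R[i], 0 < e -> exists M : nat, forall m p : nat,
    (M <= m)%N -> (M <= p)%N -> N (u m - u p) < e.
  move=> e e0; have := cR (ltW e0) => eE.
  have e0' : 0 < complex.Re e by rewrite -ltcR -eE.
  have [M hM] := hu _ e0'; exists M => m p hm hp.
  by rewrite eE hC ltcR; apply: hM.
have [l hl] := Ncomp u hu'; exists l => e e0.
have e0' : 0 < e%:C%C by rewrite ltcR.
have [M hM] := hl _ e0'; exists M => m hm.
by rewrite -ltcR -hC; apply: hM.
Qed.


Theorem lemma2p7 (k : fieldType) (A : unitAlgType k)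
    (k_inf : infinite_type k) (HsA : H_s A)
    (n : nat) (hn : (0 < n)%N) (x : 'I_n -> A)
    (x_indep : lin_indep x)
    (V_meets_units : exists v : A, in_span x v /\ v \is a GRing.unit)
    (x1_unit : x (Ordinal hn) \is a GRing.unit) :
  let V := in_span x in
  let X := fun v : A => exists alpha : k, v = moment_vec x alpha in
  [/\ (forall alpha : 'I_n -> k, injective alpha ->
         is_basis_of V (fun i => moment_vec x (alpha i))),
      (forall s : seq k, exists alpha : k,
         alpha \notin s /\ moment_vec x alpha \is a GRing.unit)
    & (exists y : 'I_n -> A,
         (forall i, X (y i) /\ y i \is a GRing.unit) /\ is_basis_of V y)].
Proof.
move=> V X.
have part2 : forall s : seq k, exists alpha : k,
         alpha \notin s /\ moment_vec x alpha \is a GRing.unit.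
  case: HsA => [fd | [bn | fp]].
  - exact: (fd_case x1_unit k_inf fd).
  - case: bn => R [[phi [pbij [N hN]]] | [phi [pbij [N hN]]]].
      exact: (bn_case (bij_inj pbij) hN x1_unit).
    apply: (bn_case _ (bn_complex hN) x1_unit).
    exact: inj_comp (bij_inj pbij) (@complexI R).
  - exact: (fp_case x1_unit k_inf fp).
split.
- by move=> alpha ainj; apply: part1.
- exact: part2.
have hseq : forall m, exists t : seq k, [/\ size t = m, uniq t &
    forall a, a \in t -> moment_vec x a \is a GRing.unit].
  elim=> [|m [t [st ut gt]]]; first by exists [::].
  have [a [anT ga]] := part2 t.
  exists (a :: t); split => /=; [by rewrite st | by rewrite anT ut |].
  by move=> b; rewrite inE => /orP[/eqP->|/gt].
have [t [st ut gt]] := hseq n.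
pose alpha (i : 'I_n) := nth 0 t i.
have ainj : injective alpha.
  move=> i j; rewrite /alpha => /eqP; rewrite nth_uniq ?st // => /eqP h.
  exact: val_inj.
exists (fun i => moment_vec x (alpha i)); split; last exact: part1.
move=> i; split; first by exists (alpha i).
by apply: gt; apply: mem_nth; rewrite st.
Qed.
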